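(* Every signed digraph $G$ on $[n]$ ($n\geq 1$) admits a nilpotent function $f:\{0,1,2\}^n\to\{0,1,2\}^n$ of class at most $\lfloor\log_2 n\rfloor+2$.
   Context: A signed digraph is a digraph (loops allowed, no multiple arcs) in which each arc is labeled positive, negative, or null (unsigned). For a finite interval of integers $A$, a function over $A$ is a map $f:A^n\to A^n$; $f^0=\mathrm{id}$, $f^k=f\circ f^{k-1}$. The interaction graph $G(f)$ is the signed digraph on $[n]$ with an arc $(j,i)$ iff $f_i(a)\neq f_i(b)$ for some $a,b\in A^n$ with $a_j<b_j$ and $a_\ell=b_\ell$ for $\ell\neq j$; the arc is positive if $f_i(a)\leq f_i(b)$ for all such pairs, negative if $f_i(a)\geq f_i(b)$ for all such pairs, and null otherwise. $G$ admits $f$ if $G(f)=G$. $f$ is nilpotent if $f^k$ is constant for some $k\geq 0$; the least such $k$ is its class. *)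

(* Defs.v *)
From mathcomp Require Import all_boot.
Set Implicit Arguments. Unset Strict Implicit. Unset Printing Implicit Defensive.

Inductive sign := Pos | Neg | Nul.

(* A signed digraph on [n] (vertices 'I_n, loops allowed, no multiple arcs):
   G j i = None      : no arc (j,i)
   G j i = Some s    : arc (j,i) with label s (positive / negative / null). *)
Definition sdigraph (n : nat) := 'I_n -> 'I_n -> option sign.

(* Configurations in A^n with A = {0,...,q-1} = 'I_q, ordered as naturals. *)
Definition config (q n : nat) := {ffun 'I_n -> 'I_q}.

Definition jpair q n (j : 'I_n) (a b : config q n) : bool :=
  (a j < b j) && [forall l : 'I_n, (l != j) ==> (a l == b l)].

Definition igraph q n (f : config q n -> config q n) : sdigraph n :=
  fun j i =>
  if ~~ [exists a : config q n, exists b : config q n,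
           jpair j a b && (f a i != f b i)] then None
  else if [forall a : config q n, forall b : config q n,
             jpair j a b ==> (f a i <= f b i)] then Some Pos
  else if [forall a : config q n, forall b : config q n,
             jpair j a b ==> (f b i <= f a i)] then Some Neg
  else Some Nul.

Definition admits q n (G : sdigraph n) (f : config q n -> config q n) : Prop :=
  forall j i, igraph f j i = G j i.

Definition iter_const q n (f : config q n -> config q n) (k : nat) : Prop :=
  exists c : config q n, forall x, iter k f x = c.

Definition nilpotent q n (f : config q n -> config q n) : Prop :=
  exists k, iter_const f k.

(* f is nilpotent of class at most m: the least k with f^k constant is <= m,
   i.e. f^k is constant for some k <= m *)
Definition nilpotent_class_le q n (f : config q n -> config q n) (m : nat) : Prop :=
  exists2 k, k <= m & iter_const f k.

(* Main.v *)
Require Import Defs.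
From mathcomp Require Import all_boot zify.
Set Implicit Arguments. Unset Strict Implicit. Unset Printing Implicit Defensive.

Lemma igraph_eq q n (f : config q n -> config q n) j i :
  igraph f j i =
   (if [exists a, exists b, jpair j a b && (f a i < f b i)] then
      (if [exists a, exists b, jpair j a b && (f b i < f a i)] then Some Nul else Some Pos)
    else if [exists a, exists b, jpair j a b && (f b i < f a i)] then Some Neg else None).
Proof.
have hA : [forall a, forall b, jpair j a b ==> (f a i <= f b i)] = ~~ [exists a, exists b, jpair j a b && (f b i < f a i)].
  apply/forallP/negP => [h /existsP [a /existsP [b /andP [jp hlt]]]|h a].
    by move: (h a) => /forallP /(_ b); rewrite jp /= leqNgt hlt.
  apply/forallP => b; apply/implyP => jp; rewrite leqNgt; apply/negP => hlt.
  by apply: h; apply/existsP; exists a; apply/existsP; exists b; rewrite jp.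
have hB : [forall a, forall b, jpair j a b ==> (f b i <= f a i)] = ~~ [exists a, exists b, jpair j a b && (f a i < f b i)].
  apply/forallP/negP => [h /existsP [a /existsP [b /andP [jp hlt]]]|h a].
    by move: (h a) => /forallP /(_ b); rewrite jp /= leqNgt hlt.
  apply/forallP => b; apply/implyP => jp; rewrite leqNgt; apply/negP => hlt.
  by apply: h; apply/existsP; exists a; apply/existsP; exists b; rewrite jp.
have hE : [exists a, exists b, jpair j a b && (f a i != f b i)] = [exists a, exists b, jpair j a b && (f a i < f b i)] || [exists a, exists b, jpair j a b && (f b i < f a i)].
  apply/existsP/orP => [[a /existsP [b /andP [jp]]]|].
    by rewrite neq_ltn => /orP [h|h]; [left|right]; apply/existsP; exists a; apply/existsP;
       exists b; rewrite jp h.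
  case => /existsP [a /existsP [b /andP [jp h]]]; exists a; apply/existsP; exists b;
    rewrite jp /= neq_ltn h ?orbT //.
rewrite /igraph hE hA hB.
by case: [exists a, exists b, jpair j a b && (f a i < f b i)]; case: [exists a, exists b, jpair j a b && (f b i < f a i)].
Qed.

Definition upd q n (x : config q n) j v : config q n := [ffun l => if l == j then v else x l].

Lemma jpair_upd q n (j : 'I_n) (a b : config q n) : jpair j a b -> b = upd a j (b j).
Proof.
case/andP => _ /forallP h; apply/ffunP => l; rewrite ffunE.
case: eqP => [->//|/eqP ne]; by move: (h l); rewrite ne => /eqP.
Qed.

Lemma line_gen q n (F : config q.+1 n -> nat) (j : 'I_n) (L : 'I_q.+1 -> bool)
   (A B : config q.+1 n -> bool) (cv dv : nat) (R : rel nat) :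
  R cv cv = false -> R dv dv = false ->
  (forall x, F x = if (L (x j) && A x) || B x then dv else cv) ->
  (forall x v, A (upd x j v) = A x) -> (forall x v, B (upd x j v) = B x) ->
  (exists x, A x && ~~ B x) ->
  [exists a, exists b, jpair j a b && R (F a) (F b)] =
  [exists al : 'I_q.+1, exists be : 'I_q.+1, (al < be) &&
       R (if L al then dv else cv) (if L be then dv else cv)].
Proof.
move=> Rc Rd hF hA hB [x0 hx0].
apply/existsP/existsP => [[a /existsP [b /andP [jp]]]|[al /existsP [be /andP [lt hr]]]].
  have eb := jpair_upd jp.
  rewrite !hF eb hA hB.
  case ba: (B a); first by rewrite !orbT Rd.
  case aa: (A a); last by rewrite !andbF /= Rc.
  rewrite !andbT !orbF ffunE eqxx => h.
  exists (a j); apply/existsP; exists (b j); rewrite h andbT.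
  by case/andP: jp.
exists (upd x0 j al); apply/existsP; exists (upd x0 j be).
have hl : forall v, (upd x0 j v) j = v by move=> v; rewrite ffunE eqxx.
rewrite !hF !hA !hB !hl; case/andP: hx0 => -> /negbTE ->; rewrite !andbT !orbF hr andbT.
rewrite /jpair !hl lt /=; apply/forallP => l; apply/implyP => ne.
by rewrite !ffunE (negbTE ne).
Qed.

Lemma line_const q n (F : config q n -> nat) (j : 'I_n) (R : rel nat) :
  (forall x, R (F x) (F x) = false) ->
  (forall x v, F (upd x j v) = F x) ->
  [exists a, exists b, jpair j a b && R (F a) (F b)] = false.
Proof.
move=> hR hF; apply/negbTE; apply/existsP => [[a /existsP [b /andP [jp]]]].
by rewrite (jpair_upd jp) hF hR.
Qed.

Definition o0 : 'I_3 := Ordinal (isT : 0 < 3).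
Definition o1 : 'I_3 := Ordinal (isT : 1 < 3).
Definition o2 : 'I_3 := Ordinal (isT : 2 < 3).
Lemma ord3 (x : 'I_3) : [\/ x = o0, x = o1 | x = o2].
Proof.
case: x => [[|[|[|m]]] hx] //; [apply: Or31|apply: Or32|apply: Or33]; exact: val_inj.
Qed.
Lemma ex3 (P : 'I_3 -> bool) : [exists x, P x] = [|| P o0, P o1 | P o2].
Proof.
apply/existsP/idP => [[x h]|]; last by case/or3P => h; eexists; exact: h.
by case: (ord3 x) => e; rewrite e in h; rewrite h ?orbT.
Qed.

Section Comb.
Variable n : nat.
Variable G : sdigraph n.
Hypothesis n1 : 1 <= n.
Local Notation V := 'I_n.

Definition isnul (s : option sign) := if s is Some Nul then true else false.
Definition posb (s : option sign) := if s is Some Pos then true else false.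
Definition source (i : V) := [forall j, ~~ isSome (G j i)].
Definition par (i : V) : V := if [pick j | isSome (G j i)] is Some j then j else i.

Lemma par_arc i : ~~ source i -> isSome (G (par i) i).
Proof.
rewrite /source /par negb_forall => /existsP [j]; rewrite negbK => hj.
by case: pickP => [k -> //|/(_ j)]; rewrite hj.
Qed.

Lemma source_arc i j : source i -> G j i = None.
Proof. by move/forallP/(_ j); case: (G j i). Qed.

Definition ty (i : V) := isnul (G (par i) i).
Definition desc (y : V) := [set z | fconnect par z y].
Definition tau (y : V) := [exists c, (par c == y) && ty c &&
   [forall c', (par c' == y) ==> (#|desc c'| <= #|desc c|)]].
Definition bad (i : V) := ~~ source i && ~~ source (par i) && (tau (par i) != ty i).

Definition reach x y := exists k, iter k par x = y.

Lemma reachP x y : reflect (reach x y) (fconnect par x y).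
Proof.
apply: (iffP idP) => [/iter_findex h|[k <-]]; last exact: fconnect_iter.
by exists (findex par x y).
Qed.

Lemma in_desc z y : (z \in desc y) = fconnect par z y.
Proof. by rewrite inE. Qed.

Lemma Ulem a b : par a = par b -> reach (par a) a -> reach (par a) b -> a = b.
Proof.
have key : forall x z, par x = par z -> forall k1 k2,
   iter k1 par (par x) = x -> iter k2 par (par x) = z ->
   (forall k, iter k par (par x) == z -> k2 <= k) -> k1 < k2 -> False.
  move=> x z exz k1 k2 h1 h2 hmin lt.
  have e : k2 = (k2 - k1).-1.+1 + k1 by rewrite prednK ?subn_gt0 // subnK // ltnW.
  have : iter (k2 - k1).-1 par (par x) == z.
    by rewrite -h2 {2}e iterD h1 -iterSr.
  move/hmin; lia.
move=> eab [ka ha] [kb hb].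
have exa : exists k, iter k par (par a) == a by exists ka; apply/eqP.
have exb : exists k, iter k par (par a) == b by exists kb; apply/eqP.
case: (ex_minnP exa) => ma /eqP hma mina.
case: (ex_minnP exb) => mb /eqP hmb minb.
case: (ltngtP ma mb) => h.
- by case: (key a b eab ma mb hma hmb minb h).
- have eba : par b = par a by [].
  rewrite eab in hma hmb mina minb.
  by case: (key b a eba mb ma hmb hma mina h).
- by rewrite -hma -hmb h.
Qed.

Lemma heavy x : tau (par x) != ty x ->
  exists h, [/\ par h = par x, h != x & #|desc x| <= #|desc h|].
Proof.
move=> hne.
case: (@arg_maxnP _ x (fun c => par c == par x) (fun c => #|desc c|) (eqxx _)) => h /eqP ph hmax.
case tx: (ty x) hne; case ta: (tau (par x)) => // _.
- (* tau false, ty x true : h has ty false *)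
  exists h; split => //; last exact: (hmax x (eqxx _)).
  apply/eqP => ehx; suff : tau (par x) by rewrite ta.
  apply/existsP; exists h; rewrite ph eqxx ehx tx /=; apply/forallP => c; apply/implyP => hc; have := hmax c hc; by rewrite -ehx.
- move: ta; rewrite /tau; move=> /existsP [c /andP [/andP [/eqP pc tc] /forallP mc]].
  exists c; split => //; first by apply/eqP => ecx; rewrite ecx tx in tc.
  exact: (implyP (mc x) (eqxx _)).
Qed.

Lemma iter_par_step k x : iter k par (par x) = iter k.+1 par x.
Proof. by rewrite iterSr. Qed.

Lemma reach_trans x y z : reach x y -> reach y z -> reach x z.
Proof. by move=> [a ha] [b hb]; exists (b + a); rewrite iterD ha. Qed.

Lemma reach_par x : reach x (par x).
Proof. by exists 1. Qed.

Lemma reach_refl x : reach x x.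
Proof. by exists 0. Qed.

Lemma cyc_of y x : reach y x -> par x = y -> reach (par y) y.
Proof. by move=> [a ha] px; exists a; rewrite -iterSr iterS ha px. Qed.

Lemma bad_nocyc x : bad x -> ~ reach (par x) x.
Proof.
move=> bx rx.
have [|h [ph hx hle]] := @heavy x; first by case/andP: bx.
have sub : desc h \subset desc x.
  apply/subsetP => z; rewrite !in_desc => /reachP rz; apply/reachP.
  apply: reach_trans rz _; apply: reach_trans (reach_par h) _; by rewrite ph.
have pin : par x \in desc x by rewrite in_desc; apply/reachP.
have pout : par x \notin desc h.
  rewrite in_desc; apply/negP => /reachP rh.
  by move/eqP: hx; apply; apply: Ulem => //; rewrite ph.
have : desc h \proper desc x by apply/properP; split => //; exists (par x).
by move/proper_card; rewrite ltnNge hle.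
Qed.

Lemma Wlem z u w : reach z u -> reach z w -> par u = par w -> u != w ->
  reach (par (par u)) (par u).
Proof.
have key : forall u w a b, iter a par z = u -> iter b par z = w -> par u = par w -> a < b ->
   reach (par (par u)) (par u).
  move=> u1 w1 a b ha hb pe lt.
  exists (b - a).-1.
  have e : b = (b - a).-1.+1 + a by lia.
  have hw : iter (b - a).-1 par (par u1) = w1 by rewrite -iterSr -ha -iterD -e.
  by rewrite -iterSr iterS hw pe.
move=> [a ha] [b hb] pe ne.
case: (ltngtP a b) => h.
- exact: key ha hb pe h.
- rewrite pe; exact: key hb ha (esym pe) h.
- by move: ne; rewrite -ha -hb h eqxx.
Qed.

Lemma double x : bad x -> bad (par x) -> (#|desc x|).*2.+1 <= #|desc (par x)|.
Proof.
move=> bx bp; set y := par x.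
have [|h [ph hx hle]] := @heavy x; first by case/andP: bx.
have ny := bad_nocyc bp.
have dis : [disjoint desc x & desc h].
  apply/pred0P => z /=; apply/negP => /andP [].
  rewrite !in_desc => /reachP rx /reachP rh.
  apply: ny; have := Wlem rx rh (esym ph); rewrite eq_sym => /(_ hx).
  by rewrite /y.
have yx : y \notin desc x.
  rewrite in_desc; apply/negP => /reachP ry; apply: ny.
  exact: cyc_of ry _.
have yh : y \notin desc h.
  rewrite in_desc; apply/negP => /reachP ry; apply: ny.
  exact: cyc_of ry _.
have sub : y |: (desc x :|: desc h) \subset desc y.
  apply/subsetP => z; rewrite !inE => /orP [/eqP ->|/orP [] /reachP rz];
    apply/reachP; first exact: reach_refl.
    by apply: reach_trans rz (reach_par x).
  by apply: reach_trans rz _; rewrite /y -ph; exact: reach_par.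
have := subset_leq_card sub.
rewrite cardsU1 inE negb_or yx yh cardsU.
have -> : desc x :&: desc h = set0.
  by apply/setP => z; rewrite !inE; move/pred0P/(_ z): dis; rewrite /= !inE.
rewrite cards0 subn0 /= -addnn => H; apply: leq_trans H; rewrite add1n ltnS leq_add2l; exact: hle.
Qed.

Lemma desc_lt x : bad x -> #|desc x| < n.
Proof.
move=> bx.
have : desc x \proper [set: V].
  apply/properP; split; first exact: subsetT.
  exists (par x); first by rewrite inE.
  by rewrite in_desc; apply/negP => /reachP; apply: bad_nocyc.
by move/proper_card; rewrite cardsT card_ord.
Qed.

Lemma chain_size i k : (forall j, j <= k -> bad (iter j par i)) ->
  (2 ^ k.+1).-1 <= #|desc (iter k par i)|.
Proof.
elim: k => [|k IH] hb.
  apply/card_gt0P; exists i; rewrite in_desc; exact: connect0.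
have h1 := IH (fun j hj => hb j (leq_trans hj (leqnSn _))).
have := double (hb k (leqnSn _)) (hb k.+1 (leqnn _)).
rewrite -iterS expnS; lia.
Qed.

Lemma exists_good i : exists k, ~~ bad (iter k par i).
Proof.
case: (boolP [exists k : 'I_n.+1, ~~ bad (iter k par i)]) => [/existsP [k hk]|];
  first by exists k.
rewrite negb_exists => /forallP hall.
  have hb : forall j, j <= n -> bad (iter j par i).
    by move=> j hj; have := hall (Ordinal (hj : j < n.+1)); rewrite negbK.
  have h3 := leq_ltn_trans (chain_size hb) (desc_lt (hb n (leqnn _))).
  move: h3 (ltn_expl n (isT : 1 < 2)); rewrite expnS; lia.
Qed.

Definition dd i := ex_minn (exists_good i).

Lemma dd_bound i : 2 ^ dd i <= n.
Proof.
rewrite /dd; case: ex_minnP => m hm hmin.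
case: m hm hmin => [|k] hm hmin; first by rewrite expn0.
have hb : forall j, j <= k -> bad (iter j par i).
  move=> j hj; apply/negPn/negP => hj'.
  have := hmin j hj'; lia.
have := leq_ltn_trans (chain_size hb) (desc_lt (hb k (leqnn _))); lia.
Qed.

Lemma dd_par i : bad i -> dd (par i) < dd i.
Proof.
move=> bi; rewrite /dd; case: ex_minnP => m hm hmin.
case: ex_minnP => m' hm' hmin'.
case: m' hm' hmin' => [|k] hm' hmin'; first by move: hm'; rewrite /= bi.
have := hmin k; rewrite iterSr in hm'; move/(_ hm'); lia.
Qed.


Lemma dd_lt i : dd i < n.
Proof. exact: leq_trans (ltn_expl _ (isT : 1 < 2)) (dd_bound i). Qed.

Fixpoint orik (k : nat) (i : V) : bool :=
  if k is k'.+1 then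
    (if source i then true else if isnul (G (par i) i) then true
     else posb (G (par i) i) == ~~ (~~ source (par i) && tau (par i) && ~~ orik k' (par i)))
  else true.

Lemma orik_stab k i : dd i < k -> orik k.+1 i = orik k i.
Proof.
have E : forall k i, orik k.+1 i = (if source i then true else if isnul (G (par i) i) then true
     else posb (G (par i) i) == ~~ (~~ source (par i) && tau (par i) && ~~ orik k (par i))) by [].
elim: k i => [|k IH] i hk //.
rewrite (E k.+1 i) (E k i).
case si: (source i) => //; case ni: (isnul (G (par i) i)) => //.
case sp: (source (par i)) => //; case tp: (tau (par i)) => //.
have bi : bad i by rewrite /bad si sp tp /ty ni.
by rewrite IH //; have := dd_par bi; lia.
Qed.

Definition ori i := orik n i.

Lemma ori_eq i : ori i = (if source i then true else if isnul (G (par i) i) then true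
     else posb (G (par i) i) == ~~ (~~ source (par i) && tau (par i) && ~~ ori (par i))).
Proof. by rewrite /ori -orik_stab ?dd_lt. Qed.

Definition cval i : nat := if source i then 1 else if tau i then (if ori i then 0 else 2)
  else (if ori i then 0 else 1).
Definition dval i : nat := if tau i then (if ori i then 2 else 0) else (if ori i then 1 else 0).

Definition Klit i (z : nat) : bool :=
  if isnul (G (par i) i) then (if cval (par i) == 1 then z != 1 else z == 1)
  else (if cval (par i) == 2 then z == 0 else z == 2).
Definition vlit j i : nat :=
  if isnul (G j i) then 1 else if posb (G j i) == ori i then 2 else 0.
Definition Sset i : {set V} := [set j | isSome (G j i) && (j != par i)].
Definition Rrest i (x : config 3 n) : bool :=
  (Sset i == set0) || [exists j in Sset i, (x j : nat) == vlit j i].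
Definition uf i (x : config 3 n) : bool := Klit i (x (par i)) && Rrest i x.
Definition vali i (x : config 3 n) : nat :=
  if source i then cval i else if uf i x then dval i else cval i.
Definition fv (x : config 3 n) : config 3 n := [ffun i => inord (vali i x)].

Lemma cval_le i : cval i <= 2.
Proof. by rewrite /cval; case: source; case: tau; case: ori. Qed.
Lemma dval_le i : dval i <= 2.
Proof. by rewrite /dval; case: tau; case: ori. Qed.

Lemma fv_val x i : (fv x i : nat) = vali i x.
Proof.
rewrite ffunE inordK // /vali; case: source; first by have := cval_le i.
by case: uf; [have := dval_le i|have := cval_le i].
Qed.

Definition lev i := if source i then 1 else (dd i).+2.

Lemma Klit_c i : Klit i (cval (par i)) = false.
Proof.
rewrite /Klit; case: isnul.
- by case: (cval (par i) == 1).
- by case E: (cval (par i) == 2) => //; move/eqP: E => ->.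
Qed.

Lemma Klit_d i : ~~ source (par i) -> tau (par i) = ty i -> Klit i (dval (par i)) = false.
Proof.
rewrite /ty /Klit /cval /dval => /negbTE -> ->.
by case: isnul; case: ori.
Qed.

Lemma dyn t x i : (0 < t -> (iter t fv x i : nat) \in [:: cval i; dval i]) /\
                  (lev i <= t -> (iter t fv x i : nat) = cval i).
Proof.
elim: t i => [|t IH] i.
  by split => //; rewrite /lev; case: source.
rewrite iterS fv_val /vali; set y := iter t fv x.
split.
  by move=> _; case: (source i); case: (uf i y); rewrite !inE eqxx ?orbT.
rewrite /lev; case si: (source i) => // hl.
suff -> : uf i y = false by [].
rewrite /uf; apply/negbTE; rewrite negb_and; apply/orP; left; apply/negbT.
case sp: (source (par i)).
  have := (IH (par i)).2; rewrite /lev sp => /(_ (leq_trans (isT : 0 < 1) _)) ->; last lia.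
  exact: Klit_c.
case bi: (bad i).
  have := (IH (par i)).2; rewrite /lev sp => ->; first exact: Klit_c.
  by have := dd_par bi; lia.
have t0 : 0 < t by lia.
have := (IH (par i)).1 t0; rewrite !inE => /orP [] /eqP ->.
- exact: Klit_c.
- apply: Klit_d; first by rewrite sp.
  by move: bi; rewrite /bad si sp /=; case: eqP.
Qed.


Lemma c2_eq p : (cval p == 2) = (~~ source p && tau p && ~~ ori p).
Proof. by rewrite /cval; case: source; case: tau; case: ori. Qed.

Lemma ori_i i : ~~ source i -> ori i =
  (if isnul (G (par i) i) then true else posb (G (par i) i) == (cval (par i) != 2)).
Proof. by move=> /negbTE si; rewrite ori_eq si c2_eq. Qed.

Lemma cvi i : ~~ source i -> cval i = if tau i then (if ori i then 0 else 2) else (if ori i then 0 else 1).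
Proof. by rewrite /cval => /negbTE ->. Qed.

Lemma vlit_le j i : vlit j i <= 2.
Proof. by rewrite /vlit; case: isnul => //; case: (posb _ == _). Qed.

Lemma Rrest_upd i x v : Rrest i (upd x (par i) v) = Rrest i x.
Proof.
rewrite /Rrest; congr orb; apply: eq_existsb => k /=.
case kS: (k \in Sset i) => //=; rewrite ffunE.
by move: kS; rewrite inE => /andP [_ /negbTE ->].
Qed.

Lemma Rrest_ex i : exists x, Rrest i x.
Proof.
case e: (Sset i == set0); first by exists [ffun _ => o0]; rewrite /Rrest e.
have [k kS] : exists k, k \in Sset i by apply/set0Pn; rewrite e.
exists [ffun _ => inord (vlit k i)]; rewrite /Rrest e /=; apply/existsP; exists k.
by rewrite kS ffunE inordK ?eqxx // ltnS vlit_le.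
Qed.

Lemma Klit_ex i : exists kv : 'I_3, Klit i kv.
Proof.
rewrite /Klit; case: isnul.
- by case: (_ == 1); [exists o0|exists o1].
- by case: (_ == 2); [exists o0|exists o2].
Qed.

Lemma uf_split i j x : j \in Sset i -> uf i x =
  (((x j : nat) == vlit j i) && Klit i (x (par i))) ||
  (Klit i (x (par i)) && [exists k in Sset i :\ j, (x k : nat) == vlit k i]).
Proof.
move=> jS.
have ne : Sset i == set0 = false by apply/negbTE/set0Pn; exists j.
have exS : [exists k in Sset i, (x k : nat) == vlit k i] =
   ((x j : nat) == vlit j i) || [exists k in Sset i :\ j, (x k : nat) == vlit k i].
  apply/existsP/orP => [[k /andP [kS hk]]|[hj|/existsP [k /andP [kS hk]]]].
  - case: (eqVneq k j) => [ekj|nkj]; first by left; rewrite -ekj.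
    by right; apply/existsP; exists k; rewrite in_setD1 nkj kS hk.
  - by exists j; rewrite jS hj.
  - by exists k; move: kS; rewrite !inE => /andP [_ ->]; rewrite hk.
rewrite /uf /Rrest ne /= exS.
by case: Klit; case: (_ == _).
Qed.

Lemma fv_admits : admits G fv.
Proof.
move=> j i; rewrite igraph_eq.
case si: (source i).
  have hc : forall x, (fv x i : nat) = cval i by move=> x; rewrite fv_val /vali si.
  rewrite (@line_const _ _ (fun x => nat_of_ord (fv x i)) j ltn) ?(@line_const _ _ (fun x => nat_of_ord (fv x i)) j (fun a b => b < a)) /=;
    try by move=> *; rewrite !hc ?ltnn.
  by rewrite source_arc // si.
have hpa := par_arc (negbT si).
have hF : forall x, (fv x i : nat) = if uf i x then dval i else cval i.
  by move=> x; rewrite fv_val /vali si.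
have cd : forall R : rel nat, (forall z, R z z = false) -> R (cval i) (cval i) = false /\ R (dval i) (dval i) = false.
  by move=> R hR; rewrite !hR.
case: (eqVneq j (par i)) => [->|njp].
- have [x0 hx0] := Rrest_ex i.
  have E1 : forall (R : rel nat), (forall z, R z z = false) ->
     [exists a, exists b, jpair (par i) a b && R (fv a i) (fv b i)] =
     [exists al : 'I_3, exists be : 'I_3, (al < be) &&
        R (if Klit i al then dval i else cval i) (if Klit i be then dval i else cval i)].
    move=> R hR; have [c1 c2] := cd R hR.
    apply: (@line_gen 2 n (fun x => nat_of_ord (fv x i)) (par i) (fun z => Klit i z) (Rrest i) (fun _ => false)) => //.
    + by move=> x; rewrite hF /uf orbF.
    + by move=> x v; rewrite Rrest_upd.
    + by exists x0; rewrite hx0.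
  rewrite (E1 ltn ltnn) (E1 (fun a b => b < a) ltnn) !ex3 (cvi (negbT si)) /dval /Klit (ori_i (negbT si)).
  move: (cval_le (par i)); case: (G (par i) i) hpa => [[]|] // _.
  + by case: (cval (par i)) => [|[|[|c]]] //; case: (tau i).
  + by case: (cval (par i)) => [|[|[|c]]] //; case: (tau i).
  + by case: (cval (par i)) => [|[|[|c]]] //; case: (tau i).
case hj: (isSome (G j i)); last first.
  have hc : forall x v, (fv (upd x j v) i : nat) = fv x i.
    move=> x v; rewrite !hF /uf /Rrest ffunE eq_sym (negbTE njp).
    congr (if _ then _ else _); congr (_ && (_ || _)); apply: eq_existsb => k /=.
    case kS: (k \in Sset i) => //=; rewrite ffunE; case: (eqVneq k j) => [ekj|_] //.
    by move: kS; rewrite ekj inE hj.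
  rewrite (@line_const _ _ (fun x => nat_of_ord (fv x i)) j ltn) ?(@line_const _ _ (fun x => nat_of_ord (fv x i)) j (fun a b => b < a)) /=;
    try by move=> *; rewrite ?hc ?ltnn.
  by case: (G j i) hj.
have jS : j \in Sset i by rewrite inE hj njp.
have [kv hkv] := Klit_ex i.
pose x0 : config 3 n := [ffun l => if l == par i then kv else inord ((vlit l i).+1 %% 3)].
have E1 : forall (R : rel nat), (forall z, R z z = false) ->
   [exists a, exists b, jpair j a b && R (fv a i) (fv b i)] =
   [exists al : 'I_3, exists be : 'I_3, (al < be) &&
      R (if (al : nat) == vlit j i then dval i else cval i)
        (if (be : nat) == vlit j i then dval i else cval i)].
  move=> R hR; have [c1 c2] := cd R hR.
  apply: (@line_gen 2 n (fun x => nat_of_ord (fv x i)) j (fun z => (z : nat) == vlit j i)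
      (fun x => Klit i (x (par i)))
      (fun x => Klit i (x (par i)) && [exists k in Sset i :\ j, (x k : nat) == vlit k i])) => //.
  + by move=> x; rewrite hF (uf_split _ jS).
  + by move=> x v /=; rewrite ffunE eq_sym (negbTE njp).
  + move=> x v /=; rewrite ffunE eq_sym (negbTE njp); congr andb.
    apply: eq_existsb => k /=; case kS: (k \in _) => //=; rewrite ffunE.
    by move: kS; rewrite !inE => /andP [/negbTE -> _].
  + exists x0; rewrite /= ffunE eqxx hkv /=; apply/existsP => [[k /andP [kS]]].
    move: kS; rewrite !inE => /andP [_ /andP [_ /negbTE kp]].
    rewrite ffunE kp inordK; last by rewrite ltn_mod.
    by move: (vlit_le k i); case: (vlit k i) => [|[|[|m]]].
rewrite (E1 ltn ltnn) (E1 (fun a b => b < a) ltnn) !ex3 (cvi (negbT si)) /dval /vlit.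
case: (G j i) hj => [[]|] // _; by case: (tau i); case: (ori i).
Qed.

End Comb.

Theorem theorem1 (n : nat) (G : sdigraph n) :
  1 <= n ->
  exists f : config 3 n -> config 3 n,
    admits G f /\ nilpotent f /\ nilpotent_class_le f (trunc_log 2 n + 2).
Proof.
move=> n1.
exists (fv G).
have hc : forall x, iter (trunc_log 2 n + 2) (fv G) x = [ffun i => inord (cval G i)].
  move=> x; apply/ffunP => i; apply: val_inj; rewrite ffunE /= inordK ?ltnS ?cval_le //.
  apply: (dyn G n1 _ x i).2.
  rewrite /lev; case: source; first by rewrite addn2.
  have := trunc_log_max (isT : 1 < 2) (dd_bound G n1 i); lia.
split; first exact: fv_admits.
split; first by exists (trunc_log 2 n + 2); eexists; exact: hc.
by exists (trunc_log 2 n + 2) => //; eexists; exact: hc.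
Qed.
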